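(* Let $V$, $f$, $\mathcal{A}$, $k,\tau,\eta$ be as described in the context (in particular $f$ normalized monotone submodular, $\mathcal{A}$ satisfying the $\beta$-iterative property, $\eta\ge4(\log k+1)$, $2\le\tau\le\frac{k}{3\eta(\log k+2)}$), and let $X$ and $Y$ be buckets constructed by PRo such that $Y$ is constructed at a later time than $X$. For any set $E_Y\subseteq Y$, $$f(X\cup(Y\setminus E_Y))\ge\frac{1}{1+\alpha}f(Y)\quad\text{and}\quad f(E_Y\mid X)\le\alpha f(X),$$ where $\alpha=\beta\frac{|E_Y|}{|X|}$.
   Context: Notation: $f(Y\mid X):=f(X\cup Y)-f(X)$; logarithms are to base 2. $V$ is a finite ground set, $f:2^V\to\mathbb{R}_{\ge0}$ is normalized ($f(\emptyset)=0$), monotone and submodular. A subroutine $\mathcal{A}(k',T)$ outputs an ordered set $(v_1,\dots,v_{k'})$ of elements of $T\subseteq V$; $\mathcal{A}_i(T)=\{v_1,\dots,v_i\}$; it satisfies the $\beta$-iterative property ($\beta\ge1$) if $f(\mathcal{A}_{i+1}(T))-f(\mathcal{A}_i(T))\ge\frac1\beta\max_{v\in T}f(v\mid\mathcal{A}_i(T))$ for all $T,i$. Algorithm PRo (inputs $V,k,\tau,\eta\in\mathbb{N}_+,\mathcal{A}$): $S_0\leftarrow\emptyset$; for $i=0,\dots,\lceil\log\tau\rceil$ and for $j=1,\dots,\lceil\tau/2^i\rceil$: $B_j\leftarrow\mathcal{A}(2^i\eta,V\setminus S_0)$, $S_0\leftarrow S_0\cup B_j$ (each such $B_j$ is a bucket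 of partition $i$); then $S_1\leftarrow\mathcal{A}(k-|S_0|,V\setminus S_0)$; output $S=S_0\cup S_1$. *)

(* Defs.v *)
From HB Require Import structures.
From mathcomp Require Import all_classical all_reals exp.
From mathcomp Require Import all_boot all_order all_algebra.
Set Implicit Arguments. Unset Strict Implicit. Unset Printing Implicit Defensive.
Import Order.TTheory GRing.Theory Num.Theory.
Local Open Scope ring_scope.

Definition log2 {R : realType} (x : R) : R := ln x / ln 2.

(* marginal gain f(Y | X) = f(X u Y) - f(X) *)
Definition marg {V : finType} {R : realType} (f : {set V} -> R) (Y X : {set V}) : R :=
  f (X :|: Y) - f X.

Definition normalized {V : finType} {R : realType} (f : {set V} -> R) :=
  f set0 = 0.
Definition nonneg_fun {V : finType} {R : realType} (f : {set V} -> R) :=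
  forall S, 0 <= f S.
Definition monotone {V : finType} {R : realType} (f : {set V} -> R) :=
  forall S T : {set V}, S \subset T -> f S <= f T.
Definition submodular {V : finType} {R : realType} (f : {set V} -> R) :=
  forall S T : {set V}, f (S :|: T) + f (S :&: T) <= f S + f T.

(* A subroutine: A k' T is an ordered set (duplicate-free sequence) *)
Definition subroutine (V : finType) := nat -> {set V} -> seq V.

Definition prefix_set {V : finType} (A : subroutine V) (k' : nat) (T : {set V}) (i : nat)
  : {set V} := [set x in take i (A k' T)].

Definition valid_subroutine {V : finType} (A : subroutine V) :=
  forall k' (T : {set V}),
    [/\ uniq (A k' T), {subset A k' T <= T} & size (A k' T) = minn k' #|T| ].

Definition beta_iterative {V : finType} {R : realType} (f : {set V} -> R) (beta : R)
  (A : subroutine V) :=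
  forall k' (T : {set V}) i, (i < size (A k' T))%N ->
    forall v, v \in T ->
      beta^-1 * marg f [set v] (prefix_set A k' T i)
        <= f (prefix_set A k' T i.+1) - f (prefix_set A k' T i).

Definition ceil_div (m d : nat) : nat := ((m + d.-1) %/ d)%N.

(* sizes of the buckets of PRo, in order of construction:
   for i = 0..ceil(log tau), for j = 1..ceil(tau/2^i), a bucket of size 2^i eta *)
Definition pro_sizes (tau eta : nat) : seq nat :=
  flatten [seq nseq (ceil_div tau (2 ^ i)) (2 ^ i * eta)%N
          | i <- iota 0 (up_log 2 tau).+1].

Fixpoint pro_buckets_from {V : finType} (A : subroutine V) (sizes : seq nat)
  (S0 : {set V}) : seq {set V} :=
  match sizes with
  | [::] => [::]
  | s :: r => let B := [set x in A s (~: S0)] in B :: pro_buckets_from A r (S0 :|: B)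
  end.

Definition pro_buckets {V : finType} (A : subroutine V) (tau eta : nat) : seq {set V} :=
  pro_buckets_from A (pro_sizes tau eta) set0.

(* Main.v *)
Require Import Defs.
From HB Require Import structures.
From mathcomp Require Import all_classical all_reals exp.
From mathcomp Require Import all_boot all_order all_algebra.
From mathcomp Require Import ring lra zify.
Import Order.TTheory GRing.Theory Num.Theory.
Local Open Scope ring_scope.

Lemma marg_antimono (V : finType) (R : realType) (f : {set V} -> R) (B S T : {set V}) :
  monotone f -> submodular f -> S \subset T -> marg f B T <= marg f B S.
Proof.
move=> mon sub ST; rewrite /marg.
have h := sub (S :|: B) T.
have e1 : S :|: B :|: T = T :|: B by rewrite setUAC (setUidPr ST).
have h2 : f S <= f ((S :|: B) :&: T) by apply: mon; rewrite subsetI subsetUl ST.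
rewrite e1 in h; lra.
Qed.

Lemma marg_subadd (V : finType) (R : realType) (f : {set V} -> R) (B C X : {set V}) :
  monotone f -> submodular f -> marg f (B :|: C) X <= marg f B X + marg f C X.
Proof.
move=> mon sub.
have h := @marg_antimono V R f C X (X :|: B) mon sub (subsetUl X B).
move: h; rewrite /marg setUA; lra.
Qed.

Lemma buckets_sub (V : finType) (A : subroutine V) ss S0 q :
  valid_subroutine A -> nth set0 (pro_buckets_from A ss S0) q \subset ~: S0.
Proof.
move=> vA; elim: ss S0 q => [|s r IH] S0 q /=; first by rewrite nth_nil sub0set.
case: q => [|q] /=.
  have [_ sA _] := vA s (~: S0).
  by apply/subsetP=> x; rewrite inE => /sA.
apply: (subset_trans (IH (S0 :|: [set x in A s (~: S0)]) q)); by rewrite setCS subsetUl.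
Qed.

Lemma size_buckets (V : finType) (A : subroutine V) ss S0 :
  size (pro_buckets_from A ss S0) = size ss.
Proof. by elim: ss S0 => [|s r IH] S0 //=; rewrite IH. Qed.

Lemma buckets_pair (V : finType) (A : subroutine V) ss S0 p q :
  valid_subroutine A -> (p < q)%N -> (q < size ss)%N ->
  exists s S, [/\ s \in ss, nth set0 (pro_buckets_from A ss S0) p = [set x in A s (~: S)]
     & nth set0 (pro_buckets_from A ss S0) q \subset ~: S].
Proof.
move=> vA; elim: ss S0 p q => [|s r IH] S0 p q //= pq.
case: p pq => [|p] pq; case: q pq => [|q] //= pq qs.
- exists s, S0; split => //; first by rewrite inE eqxx.
  apply: subset_trans (buckets_sub _ A r _ q vA) _; by rewrite setCS subsetUl.
- have [s' [S [s'r e1 e2]]] := IH (S0 :|: [set x in A s (~: S0)]) p q pq qs.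
  exists s', S; split => //; by rewrite inE s'r orbT.
Qed.

Theorem lemma4 (R : realType) (V : finType) (f : {set V} -> R) (beta : R)
  (A : subroutine V) (k tau eta : nat) (p q : nat) (E : {set V}) :
  normalized f -> nonneg_fun f -> monotone f -> submodular f ->
  1 <= beta -> valid_subroutine A -> beta_iterative f beta A ->
  (0 < eta)%N ->
  4 * (log2 (k%:R : R) + 1) <= eta%:R ->
  (2 <= tau)%N ->
  (tau%:R : R) <= k%:R / (3 * eta%:R * (log2 (k%:R : R) + 2)) ->
  (p < q)%N -> (q < size (pro_buckets A tau eta))%N ->
  let X := nth set0 (pro_buckets A tau eta) p in
  let Y := nth set0 (pro_buckets A tau eta) q in
  E \subset Y ->
  let alpha := beta * #|E|%:R / #|X|%:R in
  f (X :|: (Y :\: E)) >= (1 + alpha)^-1 * f Y /\ marg f E X <= alpha * f X.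
Proof.
move=> f0 fnn mon sub b1 vA bit eta0 _ _ _ pq qs X Y EY alpha.
have pos : all (fun s => (0 < s)%N) (pro_sizes tau eta).
  apply/allP => s /flattenP [t /mapP [i _ ->]]; rewrite mem_nseq => /andP [_ /eqP ->].
  by rewrite muln_gt0 expn_gt0 eta0.
rewrite /pro_buckets size_buckets in qs.
have [s [S [sin eX eY]]] := buckets_pair _ A _ set0 _ _ vA pq qs.
have s0 := allP pos s sin.
have eX' : X = [set x in A s (~: S)] by exact: eX.
have YS : Y \subset ~: S by exact: eY.
have ES : E \subset ~: S := subset_trans EY YS.
have ea : alpha = beta * #|E|%:R / #|X|%:R by [].
clearbody alpha; rename alpha into a.
clearbody X Y.
set T := ~: S in YS ES eX'.
set l := A s T in eX'.
have [ul sl szl] := vA s T.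
have cardX : #|X| = size l by rewrite eX' cardsE; apply/card_uniqP.
have bpos : 0 < beta by apply: lt_le_trans b1.
set c := beta * f X / #|X|%:R.
have key : forall v, v \in T -> marg f [set v] X <= c.
  move=> v vT.
  have hn : forall n, (n <= size l)%N ->
      n%:R * marg f [set v] X <= beta * f (prefix_set A s T n).
    elim=> [|n IH] hn.
      rewrite mul0r /prefix_set take0.
      have -> : [set x in [::]] = set0 :> {set V} by apply/setP => x; rewrite !inE.
      by rewrite f0 mulr0.
    have h1 := IH (ltnW hn).
    have h2 := bit s T n hn v vT.
    have h3 : marg f [set v] X <= marg f [set v] (prefix_set A s T n).
      apply: marg_antimono => //; rewrite eX' /prefix_set.
      by apply/subsetP => x; rewrite !inE => /mem_take.
    have h4 : marg f [set v] (prefix_set A s T n) <=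
        beta * (f (prefix_set A s T n.+1) - f (prefix_set A s T n)).
      have := ler_wpM2l (ltW bpos) h2.
      by rewrite mulVKf // gt_eqF.
    rewrite mulrBr in h4.
    rewrite -natr1 mulrDl mul1r; lra.
  have := hn _ (leqnn _).
  rewrite /prefix_set take_size -eX' -cardX.
  have Xpos : (0 < #|X|)%N.
    have : (0 < #|T|)%N by apply/card_gt0P; exists v.
    rewrite cardX szl; lia.
  have Xr : 0 < (#|X|%:R : R) by rewrite ltr0n.
  move=> h; rewrite /c mulrC ler_pdivlMl //.
have hE : forall t : seq V, {subset t <= E} ->
    marg f [set x in t] X <= (size t)%:R * c.
  elim=> [|b t IH] st.
    rewrite mul0r /marg.
    have -> : [set x in [::]] = set0 :> {set V} by apply/setP => x; rewrite !inE.
    by rewrite setU0 subrr.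
  have -> : [set x in b :: t] = [set b] :|: [set x in t] by apply/setP=> x; rewrite !inE.
  have h1 := @marg_subadd V R f [set b] [set x in t] X mon sub.
  have h2 : marg f [set b] X <= c.
    apply: key; apply: (subsetP ES); apply: st; by rewrite inE eqxx.
  have h3 : marg f [set x in t] X <= (size t)%:R * c.
    by apply: IH => x xt; apply: st; rewrite inE xt orbT.
  rewrite /= -natr1 mulrDl mul1r; lra.
have claim2 : marg f E X <= a * f X.
  have := hE (enum E) (fun x xE => etrans (esym (mem_enum _ _)) xE).
  have -> : [set x in enum E] = E by apply/setP => x; rewrite inE mem_enum.
  rewrite -cardE.
  have -> : a * f X = #|E|%:R * c by rewrite ea /c; ring.
  by [].
split => //.
have a0 : 0 <= a by rewrite ea divr_ge0 // mulr_ge0 // ltW.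
set W := X :|: (Y :\: E).
have h1 : f Y <= f (X :|: Y) by apply: mon; apply: subsetUr.
have eW : X :|: Y = W :|: E.
  rewrite /W -setUA; congr (_ :|: _).
  by rewrite -{1}(setID Y E) (setIidPr EY) setUC.
have h2 : marg f E W <= marg f E X by apply: marg_antimono => //; apply: subsetUl.
have h3 : f X <= f W by apply: mon; apply: subsetUl.
have h4 : a * f X <= a * f W by apply: ler_wpM2l.
rewrite ler_pdivrMl; last by lra.
move: h2 claim2; rewrite /marg -eW mulrDl mul1r => h2 h5.
apply: (le_trans h1); apply: (le_trans (y := f W + a * f X)).
  by rewrite -lerBlDl; apply: (le_trans h2).
by rewrite lerD2l.
Qed.
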